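(* Let $k$, $d$ and $n$ be positive integers such that $k \ge 6$ is even, $d \ge 2$, and $n \ge\frac{d+1}{8}(k^2-2sk+4s-4) + 1$, where $s \in \{0,1\}$ with $s \equiv \frac{k-2}{2} \pmod 2$. Then, for any function $f:[n] \rightarrow \{-1,1\}$ such that $|f([n])| \le \frac{d-1}{d+1}n$, there exists a $(d,k)$-block $A\subseteq[n]$ with $f(A)=0$.
   Context: $[n]=\{1,\dots,n\}$; $f(Y)=\sum_{y\in Y}f(y)$. A $(d,k)$-block in $[n]$ is a set $\{a_1,\dots,a_k\}\subseteq[n]$ of integers with $a_1<a_2<\dots<a_k$ and $a_{i+1}-a_i\le d$ for all $1\le i\le k-1$. *)

(* Defs.v *)
From mathcomp Require Import all_boot all_order all_algebra.
Set Implicit Arguments. Unset Strict Implicit. Unset Printing Implicit Defensive.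
Import Order.TTheory GRing.Theory Num.Theory.
Local Open Scope ring_scope.

Definition fsum (f : nat -> int) (Y : seq nat) : int := \sum_(y <- Y) f y.

(* A (d,k)-block in [n]: a set {a_1 < ... < a_k} subset of [n] with
   a_{i+1} - a_i <= d.  Represented by its increasing enumeration. *)
Definition dk_block (n d k : nat) (A : seq nat) : Prop :=
  [/\ size A = k, sorted ltn A, all (fun a => (1 <= a <= n)%N) A
    & sorted (fun a b => (b <= a + d)%N) A].

(* Main.v *)
Require Import Defs.
From mathcomp Require Import all_boot all_order all_algebra.
From mathcomp Require Import zify.
From Stdlib Require Import Classical.
Import Order.TTheory GRing.Theory Num.Theory.

Section Part0.

Definition gapd (d : nat) := fun a b : nat => (b <= a + d)%N.

Lemma sortedC (e : rel nat) x s : sorted e (x :: s) = path e x s.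
Proof. by []. Qed.

Lemma path_iota (e : rel nat) h i : (forall x, e x x.+1) -> path e h (iota h.+1 i).
Proof. move=> He; elim: i h => [|i IH] h //=; by rewrite He IH. Qed.

Lemma sorted_iota (e : rel nat) h i : (forall x, e x x.+1) -> sorted e (iota h i).
Proof. move=> He; case: i => [|i] //=; exact: path_iota. Qed.

Lemma path_iota_cat (e : rel nat) h i b s2 : (forall x, e x x.+1) ->
  path e h (iota h.+1 i ++ b :: s2) = e (h + i)%N b && path e b s2.
Proof.
move=> He; elim: i h => [|i IH] h /=; first by rewrite addn0.
by rewrite He IH addSnnS.
Qed.

Lemma first_gap s h : path ltn h s ->
  (exists i b s2, s = iota h.+1 i ++ b :: s2 /\ (h + i.+1 < b)%N) \/ s = iota h.+1 (size s).
Proof.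
elim: s h => [|y t IH] h /=; first by right.
case/andP=> hy pt.
have [Ey|ne] := eqVneq y h.+1.
  subst y. case: (IH _ pt) => [[i [b [s2 [-> lt]]]]|->].
    left; exists i.+1, b, s2; split => //. by rewrite -addSnnS.
  by right; rewrite /= size_iota.
left; exists 0%N, y, t; split => //. lia.
Qed.

Lemma last_ge x s : path ltn x s -> (x <= last x s)%N.
Proof.
elim: s x => [|y t IH] x //= /andP[xy pt]. have := IH _ pt. lia.
Qed.

Lemma interval_block n d k c : (1 <= d)%N -> (1 <= c)%N -> (c + k <= n.+1)%N ->
  dk_block n d k (iota c k).
Proof.
move=> d1 c1 ck; split; first by rewrite size_iota.
- exact: iota_ltn_sorted.
- apply/allP=> x; rewrite mem_iota; lia.
- apply: sorted_iota => x /=; lia.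
Qed.

Lemma pad n d k S : (1 <= d)%N -> (k <= n)%N -> sorted ltn S -> sorted (gapd d) S ->
  all (fun a => 1 <= a <= n)%N S -> (size S <= k)%N ->
  exists B, dk_block n d k B /\ {subset S <= B}.
Proof.
move=> d1 kn.
move Em: (k - size S)%N => m; elim: m S Em => [|m IH] S Em sl sg rg sk.
  exists S; split => //; split => //; lia.
case: S Em sl sg rg sk => [|h s] Em sl sg rg sk.
  exists (iota 1 k); split => //; apply: interval_block => //; lia.
have rh : (1 <= h <= n)%N by move/allP: rg; apply; rewrite inE eqxx.
case: (@first_gap s h sl) => [[i [b [s2 [Es lt]]]]|Es].
  subst s.
  have e1 : forall x, ltn x x.+1 by move=> x /=.
  have e2 : forall x, gapd d x x.+1 by move=> x; rewrite /gapd; lia.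
  move: (sl) (sg); rewrite /= !path_iota_cat // => /andP[_ pl] /andP[bd pg].
  have rb : (b <= n)%N.
    by move/allP: rg => /(_ b); rewrite !(inE, mem_cat) eqxx !orbT; move=> /(_ isT); lia.
  have sub : {subset h :: iota h.+1 i ++ b :: s2 <= h :: iota h.+1 i.+1 ++ b :: s2}.
    move=> x; rewrite in_cons mem_cat in_cons mem_iota.
    case/orP=> [/eqP->|/orP[H|H]]; first by rewrite in_cons eqxx.
      rewrite in_cons mem_cat mem_iota; apply/orP; right; apply/orP; left; lia.
    by rewrite in_cons mem_cat; apply/orP; right; apply/orP; right; rewrite in_cons.
  have [B [blk sB]] : exists B, dk_block n d k B /\ {subset (h :: iota h.+1 i.+1 ++ b :: s2) <= B}.
    apply: IH.
  - rewrite /= size_cat size_iota /= in Em *; rewrite size_cat size_iota /=; lia.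
  - by rewrite sortedC path_iota_cat // pl andbT.
  - rewrite sortedC path_iota_cat // pg andbT; move: bd; rewrite /gapd; lia.
  - apply/allP=> x; rewrite in_cons mem_cat mem_iota.
    case/orP=> [/eqP->//|/orP[H|H]]; first lia.
    by move/allP: rg; apply; rewrite in_cons mem_cat H !orbT.
  - rewrite /= size_cat size_iota /= in Em; rewrite /= size_cat size_iota /=; lia.
  exists B; split => // x /sub; exact: sB.
have Es' : h :: s = iota h (size (h :: s)) by rewrite Es /= size_iota.
have rl : (h + size s <= n)%N.
  case: (size s) (Es) => [|j] Es2; first lia.
  move/allP: rg => /(_ (h + j.+1)%N); rewrite Es2 inE mem_iota.
  have -> : (h < h + j.+1 < h.+1 + j.+1)%N by lia.
  rewrite orbT => /(_ isT); lia.
exists (iota (minn h (n - k).+1) k); split.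
  apply: interval_block => //; lia.
move=> x; rewrite Es' mem_iota => H; rewrite mem_iota; move: sk H => /= sk H; lia.
Qed.

Lemma gap_chain d p q : (1 <= d)%N -> (p < q)%N ->
  exists s1, [/\ path ltn p s1, path (gapd d) p s1, last p s1 = q,
    all (fun a => p < a <= q)%N s1 & size s1 = ((q - p).-1 %/ d).+1].
Proof.
move=> d1; move Eg: (q - p)%N => g; elim: g {-2}g (leqnn g) p Eg => [|G IH] g Gg p Eg pq.
  lia.
have [small|big] := leqP g d.
  exists [:: q]; split => //=.
  - by rewrite pq.
  - rewrite /gapd; apply/andP; split => //; lia.
  - apply/andP; split => //; lia.
  - rewrite divn_small //; lia.
have [s1 [l1 g1 e1 a1 z1]] := IH (g - d)%N ltac:(lia) (p + d)%N ltac:(lia) ltac:(lia).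
exists ((p + d)%N :: s1); split => /=.
- rewrite l1 andbT; lia.
- by rewrite g1 /gapd leqnn.
- exact: e1.
- apply/andP; split; first lia.
  apply/allP => x /(allP a1); lia.
- rewrite z1 -Eg.
  have -> : ((q - p).-1 = (q - (p + d)).-1 + 1 * d)%N by lia.
  rewrite divnDMl; last lia. rewrite addn1; do 3 f_equal; lia.
Qed.

Fixpoint extra (d : nat) (s : seq nat) : nat :=
  if s is x :: t then (if t is y :: _ then ((y - x).-1 %/ d + extra d t)%N else 0%N) else 0%N.

Lemma chain d x s : (1 <= d)%N -> path ltn x s ->
  exists s', [/\ path ltn x s', path (gapd d) x s', last x s' = last x s,
    all (fun a => x < a <= last x s)%N s' & {subset x :: s <= x :: s'}]
    /\ (size s' <= size s + extra d (x :: s))%N.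
Proof.
move=> d1; elim: s x => [|y t IH] x /=.
  move=> _; exists [::]; split => //; split => //.
case/andP=> xy pt.
have [s1 [l1 g1 e1 a1 z1]] := @gap_chain d x y d1 xy.
have [s2 [[l2 g2 e2 a2 sub2] z2]] := IH y pt.
have yl := @last_ge y t pt.
exists (s1 ++ s2); split; first split.
- by rewrite cat_path l1 e1 l2.
- by rewrite cat_path g1 e1 g2.
- by rewrite last_cat e1 e2.
- rewrite all_cat; apply/andP; split.
    apply/allP=> a /(allP a1); lia.
  apply/allP=> a /(allP a2); lia.
- move=> a; rewrite !in_cons mem_cat.
  case/orP=> [->//|/orP[/eqP->|H]].
    apply/orP; right; apply/orP; left.
    rewrite -e1; case: (s1) z1 => [//|c r] _; exact: mem_last.
  have := sub2 a; rewrite in_cons H orbT => /(_ isT).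
  rewrite in_cons => /orP[/eqP->|->]; last by rewrite !orbT.
  apply/orP; right; apply/orP; left.
  rewrite -e1; case: (s1) z1 => [//|c r] _; exact: mem_last.
- rewrite size_cat z1; move: z2; case: t {IH pt yl e2 a2 sub2} => [|z t] /=; lia.
Qed.

Lemma extra_split d L j : (j < size L)%N ->
  extra d L = (extra d (take j.+1 L) + extra d (drop j L))%N.
Proof.
elim: L j => [|x t IH] j //= jl.
case: j jl => [|j] jl; first by rewrite take0 drop0.
case: t IH jl => [|y t'] IH jl //=.
have := IH j jl; rewrite /= => ->.
case: j jl {IH} => [|j] jl /=; first by rewrite ?take0 /= ?drop0; lia.
lia.
Qed.

Lemma window_lb d w L : (0 < w)%N -> (0 < size L)%N ->
  (forall i, (i + w < size L)%N -> (w.+2 <= extra d (take w.+1 (drop i L)))%N) ->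
  ((size L).-1 %/ w * w.+2 <= extra d L)%N.
Proof.
move=> w0; move: {2}(size L) (leqnn (size L)) => N; elim: N L => [|N IH] L SN L0 H.
  lia.
have [small|big] := ltnP (size L).-1 w.
  by rewrite divn_small.
rewrite (@extra_split d L w); last lia.
have h0 := H 0%N ltac:(lia); rewrite drop0 in h0.
have := IH (drop w L) ltac:(rewrite size_drop; lia) ltac:(rewrite size_drop; lia).
have -> : ((size L).-1 = (size (drop w L)).-1 + 1 * w)%N by rewrite size_drop; lia.
rewrite divnDMl // mulnDl mul1n.
move=> H2; have : ((size (drop w L)).-1 %/ w * w.+2 <= extra d (drop w L))%N.
  apply: H2 => i; rewrite size_drop drop_drop => Hi; apply: H; lia.
lia.
Qed.

Lemma span_extra d x s : path ltn x s -> (d * extra d (x :: s) + size s <= last x s - x)%N.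
Proof.
elim: s x => [|y t IH] x /=; first lia.
case/andP=> xy pt.
have := IH y pt; have := @last_ge y t pt.
have := leq_divM (y - x).-1 d.
rewrite /=; case: t {IH pt} => [|z t] /=; nia.
Qed.

End Part0.

Section Part1.

Lemma sumn_le n s : all (fun a => a <= n) s -> sumn s <= n * size s.
Proof. elim: s => [|x s IH] //= /andP[xn /IH]; nia. Qed.

Lemma sorted_iota_cat (e : rel nat) a i c r : (forall x, e x x.+1) ->
  sorted e (iota a i ++ c :: r) =
  (if i is i'.+1 then e (a + i')%N c else true) && path e c r.
Proof. move=> He; case: i => [|i] //=; exact: path_iota_cat. Qed.

Local Open Scope ring_scope.

Lemma fsum_cons f x s : fsum f (x :: s) = f x + fsum f s.
Proof. by rewrite /fsum big_cons. Qed.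

Lemma fsum_cat f s t : fsum f (s ++ t) = fsum f s + fsum f t.
Proof. by rewrite /fsum big_cat. Qed.

Lemma fsum_opp f s : fsum (fun x => - f x) s = - fsum f s.
Proof. by rewrite /fsum sumrN. Qed.

Lemma fsum_count f s : (forall x, x \in s -> f x = 1 \/ f x = -1) ->
  fsum f s = (size s)%:Z - 2 * (count (fun x => f x == -1) s)%:Z.
Proof.
elim: s => [|x s IH] H; first by rewrite /fsum big_nil.
rewrite fsum_cons IH; last by move=> y ys; apply: H; rewrite in_cons ys orbT.
rewrite /=; have := H x; rewrite in_cons eqxx => /(_ isT) [->|->] /=; lia.
Qed.

Lemma sign_step (K c c' : nat) (x y u v : int) : ~~ odd K ->
  x = K%:Z - 2 * c%:Z -> y = K%:Z - 2 * c'%:Z -> x != 0 -> y != 0 -> x + u = y + v ->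
  (u = 1 \/ u = -1) -> (v = 1 \/ v = -1) -> (0 < x) = (0 < y).
Proof.
move=> oK hx hy x0 y0 e hu hv.
have HK : K = (2 * K./2)%N by rewrite mul2n -[LHS]odd_double_half (negbTE oK).
apply/idP/idP => H; lia.
Qed.

Lemma block_pm n d k (f : nat -> int) B : (forall x, (1 <= x <= n)%N -> f x = 1 \/ f x = -1) ->
  dk_block n d k B -> forall x, x \in B -> f x = 1 \/ f x = -1.
Proof. by move=> H [_ _ /allP rg _] x /rg; apply: H. Qed.

Lemma block_sum n d k (f : nat -> int) B : (forall x, (1 <= x <= n)%N -> f x = 1 \/ f x = -1) ->
  dk_block n d k B -> fsum f B = k%:Z - 2 * (count (fun x => f x == -1) B)%:Z.
Proof.
move=> H blk; rewrite (@fsum_count f B (@block_pm n d k f B H blk)).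
by case: blk => ->.
Qed.

Lemma step_block n d k (f : nat -> int) h i b s2 :
  (1 <= d)%N -> dk_block n d k (h :: iota h.+1 i ++ b :: s2) -> (h + i.+1 < b)%N ->
  [/\ dk_block n d k (iota h.+1 i ++ b.-1 :: b :: s2),
      (sumn (h :: iota h.+1 i ++ b :: s2) < sumn (iota h.+1 i ++ b.-1 :: b :: s2))%N,
      fsum f (h :: iota h.+1 i ++ b :: s2) + f b.-1 = fsum f (iota h.+1 i ++ b.-1 :: b :: s2) + f h
    & (1 <= b.-1 <= n)%N].
Proof.
move=> d1 blk lt; case: (blk) => sz sl rg sg.
have e1 : forall x, ltn x x.+1 by move=> x /=.
have e2 : forall x, gapd d x x.+1 by move=> x; rewrite /gapd; lia.
move: (sl) (sg); rewrite !sortedC !path_iota_cat // => /andP[_ pl] /andP[bd pg].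
have rb : (b <= n)%N.
  by move/allP: rg => /(_ b); rewrite in_cons mem_cat in_cons eqxx !orbT => /(_ isT); lia.
have rh : (1 <= h)%N by move/allP: rg => /(_ h); rewrite in_cons eqxx => /(_ isT); lia.
split.
- split.
  + rewrite -sz /= !size_cat /= !size_iota; lia.
  + rewrite sorted_iota_cat //= pl !andbT; case: (i) lt => [|i'] lt; lia.
  + apply/allP=> x; rewrite mem_cat in_cons in_cons.
    case/orP=> [H|/orP[/eqP->|H]].
    * by move/allP: rg; apply; rewrite in_cons mem_cat H !orbT.
    * lia.
    * by move/allP: rg; apply; rewrite in_cons mem_cat in_cons H !orbT.
  + rewrite sorted_iota_cat; last exact: e2.
    rewrite /= pg !andbT /gapd; case: (i) lt bd => [|i'] lt bd /=; rewrite /gapd; lia.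
- rewrite /= !sumn_cat /=; lia.
- rewrite fsum_cons !fsum_cat !fsum_cons; lia.
- lia.
Qed.

Lemma to_interval n d k (f : nat -> int) : (1 <= d)%N -> ~~ odd k -> (0 < k)%N ->
  (forall x, (1 <= x <= n)%N -> f x = 1 \/ f x = -1) ->
  (forall B, dk_block n d k B -> fsum f B != 0) ->
  forall B, dk_block n d k B ->
  exists h, dk_block n d k (iota h k) /\ (0 < fsum f B) = (0 < fsum f (iota h k)).
Proof.
move=> d1 ok k0 pm NZ B.
move Em: (n * k - sumn B)%N => m; elim: m {-2}m (leqnn m) B Em => [|M IH] m Mm B Em blk.
all: case: (blk) => sz sl rg sg.
all: case: B Em blk sz sl rg sg => [|h s] Em blk sz sl rg sg; first by move: sz k0 => /= <-.
all: case: (@first_gap s h sl) => [[i [b [s2 [Es lt]]]]|Es];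
  last by (exists h; rewrite -sz /= -Es).
all: subst s.
all: have [blk' sB E rb] := @step_block n d k f h i b s2 d1 blk lt.
all: have sB' : (sumn (iota h.+1 i ++ b.-1 :: b :: s2) <= n * k)%N by
  (case: (blk') => sz' _ /allP r _; rewrite -sz'; apply: sumn_le;
   apply/allP=> x /r; lia).
- lia.
- have [h' [bh' sg']] := IH (n * k - sumn (iota h.+1 i ++ b.-1 :: b :: s2))%N ltac:(lia) _ erefl blk'.
  exists h'; split => //; rewrite -sg'.
  apply: (@sign_step k _ _ _ _ _ _ ok (@block_sum n d k f _ pm blk) (@block_sum n d k f _ pm blk') (NZ _ blk) (NZ _ blk') E).
  + apply: pm; lia.
  + apply: pm; move: rg => /andP[]; lia.
Qed.

Lemma all_blocks_sign n d k (f : nat -> int) : (1 <= d)%N -> ~~ odd k -> (0 < k)%N ->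
  (forall x, (1 <= x <= n)%N -> f x = 1 \/ f x = -1) ->
  (forall B, dk_block n d k B -> fsum f B != 0) ->
  forall B, dk_block n d k B -> (0 < fsum f B) = (0 < fsum f (iota 1 k)).
Proof.
move=> d1 ok k0 pm NZ.
have slide : forall a, (1 <= a)%N -> (a + k <= n)%N ->
    (0 < fsum f (iota a k)) = (0 < fsum f (iota a.+1 k)).
  move=> a a1 ak.
  have b1 : dk_block n d k (iota a k) by apply: interval_block; lia.
  have b2 : dk_block n d k (iota a.+1 k) by apply: interval_block; lia.
  have E : fsum f (iota a k) + f (a + k)%N = fsum f (iota a.+1 k) + f a.
    have := congr1 (fsum f) (iotaD a k 1); rewrite addn1 /= fsum_cons fsum_cat.
    rewrite /fsum big_cons big_nil; lia.
  apply: (@sign_step k _ _ _ _ _ _ ok (@block_sum n d k f _ pm b1)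
     (@block_sum n d k f _ pm b2) (NZ _ b1) (NZ _ b2) E).
  + apply: pm; lia.
  + apply: pm; lia.
have ints : forall a, (1 <= a)%N -> (a + k <= n.+1)%N ->
    (0 < fsum f (iota a k)) = (0 < fsum f (iota 1 k)).
  elim=> [|a IH] a1 ak; first lia.
  case: a IH a1 ak => [|a] IH a1 ak; first by [].
  rewrite -slide; [apply: IH|..]; lia.
move=> B blk.
have [h [bh ->]] := @to_interval n d k f d1 ok k0 pm NZ B blk.
case: bh => _ _ /allP rg _.
have := rg h; have := rg (h + k.-1)%N; rewrite !mem_iota.
move=> H1 H2; apply: ints.
- have := H2 ltac:(lia); lia.
- have := H1 ltac:(lia); lia.
Qed.

End Part1.

Section Part2.

Lemma arith w M q r : (2 <= w)%N -> (M.-1 = q * w + r)%N -> (r < w)%N ->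
  (w * (w + 2 - w %% 2) <= 2 * M.-1)%N -> (r + 2 <= 2 * q)%N.
Proof.
move=> w2 EM rw H.
have Ew := divn_eq w 2.
have s2 : (w %% 2 < 2)%N by rewrite ltn_mod.
set u := w %/ 2 in Ew; set s := w %% 2 in Ew s2 H.
have [qu|uq] := leqP q u.
  have : (q * w <= u * w)%N by rewrite leq_mul2r qu orbT.
  case: s Ew s2 H => [|[|]] //= Ew _ H; nia.
case: s Ew s2 H => [|[|]] //= Ew _ H; nia.
Qed.

Local Open Scope ring_scope.

Lemma counting n d k (g : nat -> int) w : k = (2 * w + 2)%N -> (2 <= w)%N -> (1 <= d)%N ->
  (k <= n)%N ->
  (forall x, (1 <= x <= n)%N -> g x = 1 \/ g x = -1) ->
  (forall B, dk_block n d k B -> 0 < fsum g B) ->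
  let M := count (fun x => g x == -1) (iota 1 n) in
  (n <= d.+1 * M)%N ->
  (w * (w + 2 - w %% 2) <= 2 * M.-1)%N -> False.
Proof.
move=> Ek w2 d1 kn pm pos M nM HX.
set L := filter (fun x => g x == -1) (iota 1 n).
have EM : M = size L by rewrite /M size_filter.
have sL : sorted ltn L by apply: sorted_filter; [exact: ltn_trans | exact: iota_ltn_sorted].
have inL : forall x, x \in L -> (1 <= x <= n)%N /\ g x = -1.
  move=> x; rewrite mem_filter mem_iota => /andP[/eqP gx xr]; split => //; lia.
have win : forall i, (i + w < size L)%N -> (w.+2 <= extra d (take w.+1 (drop i L)))%N.
  move=> i iw; rewrite leqNgt; apply/negP => ex.
  set W := take w.+1 (drop i L) in ex.
  have szW : size W = w.+1 by rewrite /W size_take size_drop; case: ifP; lia.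
  have subW : {subset W <= L}.
    move=> y yW; apply: (mem_subseq (drop_subseq L i)); apply: (mem_subseq (take_subseq _ w.+1)); exact: yW.
  have sW : sorted ltn W.
    apply: (subseq_sorted ltn_trans _ sL).
    exact: (subseq_trans (take_subseq _ _) (drop_subseq _ _)).
  case EW: W szW subW sW ex => [//|x s] szW subW sW ex.
  have [s' [[l1 g1 e1 a1 sub1] z1]] := @chain d x s d1 sW.
  have xr := inL x (subW x (mem_head _ _)).
  have lr : (last x s <= n)%N.
    have := inL (last x s) (subW _ (mem_last _ _)); lia.
  have [B [blk sB]] : exists B, dk_block n d k B /\ {subset x :: s' <= B}.
    apply: pad => //.
    + rewrite /= (proj1 xr) /=; apply/allP => a /(allP a1); lia.
    + have szs : size s = w by case: szW.
      change ((size s').+1 <= k)%N; lia.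
  have cnt : (w.+1 <= count (fun x => g x == -1%R) B)%N.
    rewrite -szW -size_filter; apply: uniq_leq_size.
      exact: (sorted_uniq ltn_trans ltnn sW).
    move=> y yW; rewrite mem_filter (proj2 (inL y (subW y yW))) eqxx /=.
    exact: sB (sub1 y yW).
  have := pos B blk; rewrite (@block_sum n d k g B pm blk) Ek; lia.
have L0 : (0 < size L)%N by rewrite -EM; nia.
have lb := @window_lb d w L ltac:(lia) L0 win.
case EL: L sL inL lb L0 EM => [//|x s] sL inL lb L0 EM.
have sp := @span_extra d x s sL.
have xr := proj1 (inL x (mem_head _ _)).
have lr := proj1 (inL (last x s) (mem_last _ _)).
rewrite /= in EM.
have [qr rw] : (M.-1 = M.-1 %/ w * w + M.-1 %% w)%N /\ (M.-1 %% w < w)%N.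
  by split; [exact: divn_eq | rewrite ltn_mod; lia].
have H2 := @arith w M _ _ w2 qr rw HX.
have lb2 : ((M.-1 %/ w) * w.+2 <= extra d (x :: s))%N by rewrite EM; exact: lb.
move: qr rw H2 lb2; set q := (M.-1 %/ w)%N; set r := (M.-1 %% w)%N => qr rw H2 lb2.
set E := extra d (x :: s) in sp lb2.
have ME : (M.+1 <= E)%N by nia.
have : (d * M.+1 <= d * E)%N by rewrite leq_mul2l ME orbT.
have : (size s = M.-1)%N by rewrite EM.
nia.
Qed.

End Part2.

Section Part3.
Local Open Scope ring_scope.


Lemma final (n d k : nat) (g : nat -> int) w : k = (2 * w + 2)%N -> (2 <= w)%N -> (1 <= d)%N ->
  (forall x, (1 <= x <= n)%N -> g x = 1 \/ g x = -1) ->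
  (forall B, dk_block n d k B -> 0 < fsum g B) ->
  (d.+1 * (4 * w * (w + 2 - w %% 2)) <= 8 * n.-1)%N ->
  (d%:Z + 1) * `|fsum g (iota 1 n)| <= (d%:Z - 1) * n%:Z -> False.
Proof.
move=> Ek w2 d1 pm pos HY Habs.
have kn : (k <= n)%N.
  have h1 : (w.+1 <= w + 2 - w %% 2)%N by have := ltn_pmod w (isT : (0 < 2)%N); lia.
  have h2 : (w * w.+1 <= w * (w + 2 - w %% 2))%N by rewrite leq_mul2l h1 orbT.
  have h3 : (2 * (4 * w * (w + 2 - w %% 2)) <= d.+1 * (4 * w * (w + 2 - w %% 2)))%N.
    by rewrite leq_mul2r ltnS d1 orbT.
  nia.
have pmi : forall x, x \in iota 1 n -> g x = 1 \/ g x = -1.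
  by move=> x; rewrite mem_iota => H; apply: pm; lia.
have := @fsum_count g (iota 1 n) pmi; rewrite size_iota => Es.
set M := count (fun x => g x == -1) (iota 1 n) in Es.
have nM : (n <= d.+1 * M)%N.
  have := ler_norm (fsum g (iota 1 n)); rewrite Es => Hn.
  rewrite Es in Habs; nia.
have ev : ~~ odd (w * (w + 2 - w %% 2)).
  rewrite oddM modn2; case Ho: (odd w) => //=.
  by rewrite addn2 subn1 /= Ho.
have HX : (w * (w + 2 - w %% 2) <= 2 * M.-1)%N.
  have lt : (w * (w + 2 - w %% 2) < 2 * M)%N.
    rewrite -(ltn_pmul2l (ltn0Sn d)); nia.
  move: ev lt; set Y := (w * (w + 2 - w %% 2))%N => ev lt.
  have := odd_double_half Y; rewrite (negbTE ev) add0n => EY.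
  rewrite -EY in lt *; lia.
exact: (@counting n d k g w Ek w2 d1 kn pm pos nM HX).
Qed.


End Part3.

Local Open Scope ring_scope.

Theorem theorem3p2 (k d n : nat) (f : nat -> int) :
  (6 <= k)%N -> ~~ odd k -> (2 <= d)%N ->
  let s : nat := (((k - 2) %/ 2) %% 2)%N in
  (* n >= (d+1)/8 (k^2 - 2sk + 4s - 4) + 1, cleared of denominators *)
  (d%:Z + 1) * (k%:Z ^+ 2 - 2 * s%:Z * k%:Z + 4 * s%:Z - 4) <= 8 * (n%:Z - 1) ->
  (forall x, (1 <= x <= n)%N -> f x = 1 \/ f x = -1) ->
  (* |f([n])| <= (d-1)/(d+1) n, cleared of the positive denominator d+1 *)
  (d%:Z + 1) * `|fsum f (iota 1 n)| <= (d%:Z - 1) * n%:Z ->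
  exists A : seq nat, dk_block n d k A /\ fsum f A = 0.
Proof.
move=> k6 ok d2 s Hn pm Habs.
case: (classic (exists A, dk_block n d k A /\ fsum f A = 0)) => [//|NZ0].
have NZ : forall B, dk_block n d k B -> fsum f B != 0.
  by move=> B blk; apply/eqP => H; apply: NZ0; exists B.
exfalso.
have d1 : (1 <= d)%N by lia.
have k0 : (0 < k)%N by lia.
set w := (k./2).-1.
have Ek : k = (2 * w + 2)%N.
  have := odd_double_half k; rewrite (negbTE ok) add0n -mul2n /w; lia.
have w2 : (2 <= w)%N by lia.
have Es : s = (w %% 2)%N.
  by rewrite /s Ek; congr (_ %% _)%N; rewrite addnK mulKn.
have HY : (d.+1 * (4 * w * (w + 2 - w %% 2)) <= 8 * n.-1)%N.
  move: Hn; rewrite Es Ek expr2.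
  have : (w %% 2 < 2)%N by rewrite ltn_mod.
  move: (w %% 2)%N => t; case: t => [|[|t]] // _ Hn; nia.
case: (boolP (0 < fsum f (iota 1 k))) => Hpos.
  apply: (@final n d k f w Ek w2 d1 pm _ HY Habs) => B blk.
  by rewrite (@all_blocks_sign n d k f d1 ok k0 pm NZ B blk).
apply: (@final n d k (fun x => - f x) w Ek w2 d1 _ _ HY).
- by move=> x /pm [->|->]; [right|left]; rewrite ?opprK.
- move=> B blk; rewrite fsum_opp oppr_gt0.
  have := @all_blocks_sign n d k f d1 ok k0 pm NZ B blk; rewrite (negbTE Hpos).
  have := NZ B blk; lia.
- by rewrite fsum_opp normrN.
Qed.
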